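(* For a graph $G$ and integer $\tau\ge 1$ define $$Q_{\mathrm{Del\text{-}N}}(G,\tau)=-\min\{\,|V(G)|-|V(G^* )| : G^*\subseteq G,\ \deg(G^* )\le\tau\,\},$$ the negative of the minimum number of nodes whose deletion (with incident edges) leaves maximum degree at most $\tau$. Then: (1) for fixed $G$, $Q_{\mathrm{Del\text{-}N}}(G,\tau)$ is non-decreasing in $\tau$ and equals $0$ for $\tau\ge\deg(G)$; (2) for any node-neighboring graphs $G,G'$, $|Q_{\mathrm{Del\text{-}N}}(G,\tau)-Q_{\mathrm{Del\text{-}N}}(G',\tau)|\le1$ for all $\tau$; (3) for node-neighboring $G,G'$ with $G\subseteq G'$, $Q_{\mathrm{Del\text{-}N}}(G,\tau)\ge Q_{\mathrm{Del\text{-}N}}(G',\tau)$ for all $\tau$.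
   Context: Graphs are finite, simple, undirected; $\deg(G)$ is the maximum degree. For graphs $H,G$, $H\subseteq G$ means $H$ is obtained from $G$ by deleting a (possibly empty) set of nodes together with all edges incident to them. Two graphs $G,G'$ are node-neighboring if one is obtained from the other by deleting a single node together with its incident edges. *)

(* Defs.v *)
From mathcomp Require Import all_boot all_order all_algebra.
Set Implicit Arguments. Unset Strict Implicit. Unset Printing Implicit Defensive.
Import Order.TTheory GRing.Theory Num.Theory.

(* A finite simple graph is represented by a vertex set V : {set T} inside an
   ambient finite type T, with a symmetric irreflexive edge relation e : rel T.
   A subgraph H ⊆ G in the sense of the paper (node deletion) is the induced
   subgraph on a subset S ⊆ V. *)

Definition degIn (T : finType) (e : rel T) (S : {set T}) (x : T) : nat :=
  #|[set y in S | e x y]|.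

Definition maxdeg (T : finType) (e : rel T) (S : {set T}) : nat :=
  \max_(x in S) degIn e S x.

(* minimum number of nodes to delete from (V,e) so that max degree <= tau;
   the empty set is always feasible, so #|V| is a valid default. *)
Definition minDelN (T : finType) (e : rel T) (V : {set T}) (tau : nat) : nat :=
  \big[minn/#|V|]_(S : {set T} | (S \subset V) && (maxdeg e S <= tau))
     (#|V| - #|S|).

Definition QDelN (T : finType) (e : rel T) (V : {set T}) (tau : nat) : int :=
  - (minDelN e V tau)%:Z.

(* Main.v *)
Require Import Defs.
From HB Require Import structures.
From mathcomp Require Import all_boot all_order all_algebra.
From mathcomp Require Import zify.
Import Order.TTheory GRing.Theory Num.Theory.
Set Implicit Arguments.

HB.instance Definition _ := SemiGroup.isComLaw.Build nat minn minnA minnC.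

Lemma maxdeg_sub (T : finType) (e : rel T) (A B : {set T}) :
  A \subset B -> (maxdeg e A <= maxdeg e B)%N.
Proof.
move=> AB; rewrite /maxdeg; apply/bigmax_leqP => x xA.
apply: leq_trans (leq_bigmax_cond _ (subsetP AB x xA)).
rewrite /degIn; apply: subset_leq_card; apply/subsetP => y.
by rewrite !inE => /andP[yA ->]; rewrite (subsetP AB y yA).
Qed.

Lemma maxdeg0 (T : finType) (e : rel T) : maxdeg e set0 = 0%N.
Proof. by rewrite /maxdeg big_pred0 // => x; rewrite inE. Qed.

Lemma minDelN_le (T : finType) (e : rel T) (V S : {set T}) (tau : nat) :
  S \subset V -> (maxdeg e S <= tau)%N -> (minDelN e V tau <= #|V| - #|S|)%N.
Proof.
move=> SV Sd; rewrite /minDelN (@big_rem_AC _ _ _ _ _ S) ?mem_index_enum // SV Sd /=.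
exact: geq_minl.
Qed.

Lemma minDelN_wit (T : finType) (e : rel T) (V : {set T}) (tau : nat) :
  exists S : {set T}, [/\ S \subset V, (maxdeg e S <= tau)%N & minDelN e V tau = #|V| - #|S|].
Proof.
rewrite /minDelN; apply: (big_ind (fun x => exists S : {set T}, [/\ S \subset V, (maxdeg e S <= tau)%N & x = #|V| - #|S|])).
- exists set0; rewrite sub0set maxdeg0 cards0 subn0; split => //.
- move=> x y [S1 [h1 h2 ->]] [S2 [k1 k2 ->]].
  case: (leqP (#|V| - #|S1|) (#|V| - #|S2|)) => h.
    by exists S1; split => //; rewrite (minn_idPl h).
  by exists S2; split => //; rewrite (minn_idPr (ltnW h)).
- by move=> S /andP[a b]; exists S.
Qed.

Lemma cardD1le (T : finType) (A : {set T}) v : (#|A| <= #|A :\ v|.+1)%N.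
Proof. by rewrite (cardsD1 v A); case: (v \in A). Qed.

Lemma step1 (T : finType) (e : rel T) (V : {set T}) v (tau : nat) : v \in V ->
  (minDelN e (V :\ v) tau <= minDelN e V tau)%N.
Proof.
move=> vV; have [S [SV Sd ->]] := minDelN_wit e V tau.
have H : S :\ v \subset V :\ v by apply: setSD.
have K := @minDelN_le _ e _ _ _ H (leq_trans (maxdeg_sub e (subsetDl S [set v])) Sd).
apply: leq_trans K _.
have := cardsD1 v V; rewrite vV => ->.
have := cardD1le S v; have := subset_leq_card SV; lia.
Qed.

Lemma step2 (T : finType) (e : rel T) (V : {set T}) v (tau : nat) : v \in V ->
  (minDelN e V tau <= (minDelN e (V :\ v) tau).+1)%N.
Proof.
move=> vV; have [S [SV Sd ->]] := minDelN_wit e (V :\ v) tau.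
have SV' : S \subset V by apply: subset_trans SV (subsetDl _ _).
apply: leq_trans (@minDelN_le _ e _ _ _ SV' Sd) _.
have := cardsD1 v V; rewrite vV => ->; lia.
Qed.

Local Open Scope ring_scope.

Theorem mainTheorem4 :
  (* (1) monotone in tau, and 0 once tau >= deg(G) *)
  (forall (T : finType) (e : rel T), symmetric e -> irreflexive e ->
   forall V : {set T},
     (forall tau1 tau2 : nat, (0 < tau1)%N -> (tau1 <= tau2)%N ->
        QDelN e V tau1 <= QDelN e V tau2) /\
     (forall tau : nat, (0 < tau)%N -> (maxdeg e V <= tau)%N ->
        QDelN e V tau = 0)) /\
  (* (2) node-neighboring graphs G and G - v *)
  (forall (T : finType) (e : rel T), symmetric e -> irreflexive e ->
   forall (V : {set T}) (v : T), v \in V ->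
   forall tau : nat, (0 < tau)%N ->
     `|QDelN e V tau - QDelN e (V :\ v) tau| <= 1) /\
  (* (3) G = G' - v is the smaller of the two neighbors *)
  (forall (T : finType) (e : rel T), symmetric e -> irreflexive e ->
   forall (V : {set T}) (v : T), v \in V ->
   forall tau : nat, (0 < tau)%N ->
     QDelN e V tau <= QDelN e (V :\ v) tau).
Proof.
split; [|split].
- move=> T e _ _ V; split.
    move=> t1 t2 _ t12; rewrite /QDelN lerN2 lez_nat.
    have [S [SV Sd ->]] := minDelN_wit e V t1.
    exact: @minDelN_le _ e _ _ _ SV (leq_trans Sd t12).
  move=> t _ h; rewrite /QDelN.
  have := @minDelN_le _ e _ _ _ (subxx V) h; rewrite subnn leqn0 => /eqP -> //.
- move=> T e _ _ V v vV t _; rewrite /QDelN.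
  have := step1 e t vV; have := step2 e t vV.
  move: (minDelN e V t) (minDelN e (V :\ v) t) => a b h1 h2.
  rewrite opprK addrC -[X in `|X|]opprK opprB normrN.
  have -> : (a%:Z - b%:Z) = (a - b)%N%:Z by rewrite subzn.
  by rewrite ger0_norm // lez_nat; lia.
- move=> T e _ _ V v vV t _; rewrite /QDelN lerN2 lez_nat; exact: step1.
Qed.
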